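(* Let $\mathcal G=\mathcal G^{(n)}$ be, for each $n$, an $(\alpha,A,\beta,B,\epsilon,\vartheta)$-good $(\Delta_V,\Delta_C)$-regular bipartite graph with $n$ variable nodes and $n(1-R)$ check nodes, and let $H$ be the random parity-check matrix of the $(\mathcal G,\lambda)$ LDA ensemble. If $B>2+(1+\delta)/\lambda$ for some $\delta>0$, then \[ \Pr[H\text{ is not full-rank}]\le n^{-(2\lambda+\delta)}(1+o(1)), \] where $o(1)\to0$ as $n\to\infty$.
   Context: $0<R<1$, $\lambda>0$, $\Delta_V/\Delta_C=1-R$. For a vertex set $S$, $N(S)$ is its neighbourhood. $\mathcal G$ is $(\alpha,A,\beta,B,\epsilon,\vartheta)$-good (with $1\le\alpha<A$, $\frac1{1-R}<\beta<\min\{\frac2{1-R},B\}$, $0<\epsilon<(1-R)/A$, $0<\vartheta<1/(B(1-R))$) if: (L1) every set $S$ of variable nodes with $|S|\le\lceil\epsilon n\rceil$ has $|N(S)|\ge A|S|$; (L2) every set $S$ of variable nodes with $|S|\le\lceil n(1-R)/(2\alpha)\rceil$ has $|N(S)|\ge\alpha|S|$; (R1) every set $T$ of check nodes with $|T|\le\vartheta n(1-R)$ has $|N(T)|\ge B|T|$; (R2) every set $T$ of check nodes with $|T|\le n(1-R)/2$ has $|N(T)|\ge\beta|T|$. The ensemble: $p$ is the smallest prime $\ge n^\lambda$; $\widehat H$ is the $n(1-R)\times n$ $0/1$ biadjacency matrix of $\mathcal G$ (rows = check nodes); $H$ has entries $h_{i,j}=\widehat h_{i,j}h'_{i,j}$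 with $h'_{i,j}$ i.i.d. uniform on $\mathbb F_p$. Full-rank means rank $n(1-R)$ over $\mathbb F_p$. *)

(* Defs.v *)
From HB Require Import structures.
From mathcomp Require Import all_boot all_order all_algebra.
From mathcomp Require Import all_classical all_reals all_analysis.
Set Implicit Arguments. Unset Strict Implicit. Unset Printing Implicit Defensive.
Import Order.TTheory GRing.Theory Num.Theory.
Local Open Scope ring_scope.

(* A bipartite graph with m check nodes (rows) and n variable nodes (columns)
   is given by its 0/1 biadjacency matrix Hhat : 'M[bool]_(m, n). *)

Definition NV (m n : nat) (Hhat : 'M[bool]_(m, n)) (S : {set 'I_n}) : {set 'I_m} :=
  [set i | [exists j in S, Hhat i j]].

Definition NC (m n : nat) (Hhat : 'M[bool]_(m, n)) (T : {set 'I_m}) : {set 'I_n} :=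
  [set j | [exists i in T, Hhat i j]].

Definition regular (m n : nat) (Hhat : 'M[bool]_(m, n)) (dV dC : nat) : Prop :=
  (forall j : 'I_n, #|[set i | Hhat i j]| = dV) /\
  (forall i : 'I_m, #|[set j | Hhat i j]| = dC).

(* (alpha, A, beta, B, eps, theta)-good, with rate Rt (so 1 - Rt = dV/dC) *)
Definition good {K : realType} (Rt : K) (m n : nat) (Hhat : 'M[bool]_(m, n))
    (alpha A beta B eps theta : K) : Prop :=
  [/\ (1 <= alpha) /\ (alpha < A),
      (1 / (1 - Rt) < beta) /\ (beta < Num.min (2 / (1 - Rt)) B),
      (0 < eps) /\ (eps < (1 - Rt) / A),
      (0 < theta) /\ (theta < 1 / (B * (1 - Rt))) &
  [/\
      (forall S : {set 'I_n}, (#|S|%:Z <= Num.ceil (eps * n%:R))%R ->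
          A * #|S|%:R <= #|NV Hhat S|%:R),
      (forall S : {set 'I_n},
          (#|S|%:Z <= Num.ceil (n%:R * (1 - Rt) / (2 * alpha)))%R ->
          alpha * #|S|%:R <= #|NV Hhat S|%:R),
      (forall T : {set 'I_m}, #|T|%:R <= theta * n%:R * (1 - Rt) ->
          B * #|T|%:R <= #|NC Hhat T|%:R) &
      (forall T : {set 'I_m}, #|T|%:R <= n%:R * (1 - Rt) / 2 ->
          beta * #|T|%:R <= #|NC Hhat T|%:R)]].

Lemma exists_prime_ge (k : nat) : exists p, prime p && (k <= p)%N.
Proof.
case: (prime_above k) => p kp pp; exists p; rewrite pp /=; exact: ltnW.
Qed.

Definition lda_prime {K : realType} (n : nat) (lam : K) : nat :=
  ex_minn (exists_prime_ge `|Num.ceil ((n%:R : K) `^ lam)|%N).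

Definition lda_matrix (p m n : nat) (Hhat : 'M[bool]_(m, n)) (H' : 'M['F_p]_(m, n))
  : 'M['F_p]_(m, n) :=
  \matrix_(i, j) ((Hhat i j : nat)%:R * H' i j).

(* Pr over H' with i.i.d. uniform entries on F_p (i.e. H' uniform on all
   m x n matrices over F_p) that H has rank < m over F_p *)
Definition prob_not_full_rank {K : realType} (lam : K) (m n : nat)
    (Hhat : 'M[bool]_(m, n)) : K :=
  let p := lda_prime n lam in
  (#|[set H' : 'M['F_p]_(m, n) | \rank (lda_matrix Hhat H') != m]|%:R /
   #|{: 'M['F_p]_(m, n)}|%:R).

(* Main.v *)
Require Import Defs.
From HB Require Import structures.
From mathcomp Require Import all_boot all_order all_algebra.
From mathcomp Require Import all_classical all_reals all_analysis.
From mathcomp Require Import ring lra zify.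
Import Order.TTheory GRing.Theory Num.Theory numFieldNormedType.Exports.
Set Implicit Arguments. Unset Strict Implicit. Unset Printing Implicit Defensive.
Local Open Scope ring_scope.



Section Count.
Variable F : finFieldType.
Variables m n : nat.
Variable Hh : 'M[bool]_(m, n).

Definition ldaF (X : 'M[F]_(m, n)) : 'M[F]_(m, n) :=
  \matrix_(i, j) ((Hh i j : nat)%:R * X i j).

Lemma ldaFD X Y : ldaF (X + Y) = ldaF X + ldaF Y.
Proof. by apply/matrixP => i j; rewrite !mxE mulrDr. Qed.

Definition Eset (y : 'rV[F]_m) := [set X : 'M[F]_(m, n) | y *m ldaF X == 0].
Definition supp (y : 'rV[F]_m) := [set i | y 0 i != 0].

Definition Dmx (T : {set 'I_m}) (f : {ffun 'I_n -> F}) : 'M[F]_(m, n) :=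
  \matrix_(i, j) (if [pick k in T | Hh k j] == Some i then f j else 0).

Lemma Dmx_col y f j :
  (y *m ldaF (Dmx (supp y) f)) 0 j =
  if [pick k in supp y | Hh k j] is Some k then y 0 k * f j else 0.
Proof.
rewrite !mxE; under eq_bigr => i _ do rewrite !mxE.
case: pickP => [k /andP[kT hk]|none].
  rewrite (bigD1 k) //= big1 ?addr0; last first.
    move=> i ik; case: eqP => [[ki]|_]; last by rewrite !mulr0.
    by rewrite ki eqxx in ik.
  by rewrite eqxx hk mul1r.
by apply: big1 => i _; rewrite /= !mulr0.
Qed.

Lemma E_bound (y : 'rV[F]_m) :
  (#|Eset y| * #|F| ^ #|NC Hh (supp y)| <= #|F| ^ (m * n))%N.
Proof.
set T := supp y.
pose P := [set f : {ffun 'I_n -> F} | f \in pffun_on (0 : F) (NC Hh T) predT].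
have cP : #|P| = (#|F| ^ #|NC Hh T|)%N.
  by rewrite cardsE card_pffun_on cardT cardE.
rewrite -cP -cardsX -card_mx.
pose Phi := fun u : 'M[F]_(m, n) * {ffun 'I_n -> F} => u.1 + Dmx T u.2.
rewrite -(card_in_imset (f := Phi)); first exact: max_card.
move=> [X f] [X' f'] /setXP[/= EX Pf] /setXP[/= EX' Pf'] /= eqPhi.
have eqf : f = f'.
  apply/ffunP => j.
  have := congr1 (fun M => (y *m ldaF M) 0 j) eqPhi => /=.
  move: EX EX'; rewrite !inE => /eqP EX /eqP EX'.
  rewrite !ldaFD !mulmxDr EX EX' !add0r !Dmx_col.
  case: pickP => [k /andP[kT hk]|none].
    by move/(mulfI _); apply; rewrite inE in kT.
  move=> _.
  move: Pf Pf'; rewrite !inE => /pffun_onP[/fintype.subsetP s1 _] /pffun_onP[/fintype.subsetP s2 _].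
  have jN : j \notin NC Hh T.
    by rewrite inE; apply/existsP => -[i /andP[iT hij]]; have := none i; rewrite /= iT hij.
  have z1 : f j = 0 by apply/eqP; apply: contraNT jN => fj; apply: s1; rewrite inE.
  have z2 : f' j = 0 by apply/eqP; apply: contraNT jN => fj; apply: s2; rewrite inE.
  by rewrite z1 z2.
move: eqPhi; rewrite /Phi /= -eqf => /addIr ->.
by rewrite eqf.
Qed.
End Count.

Section Count2.
Variable F : finFieldType.
Variables m n : nat.
Variable Hh : 'M[bool]_(m, n).

Definition Bad := [set X : 'M[F]_(m, n) | \rank (ldaF Hh X) != m].

Lemma bad_many X : X \in Bad ->
  (#|F|.-1 <= #|[set y : 'rV[F]_m | (y != 0%R) && (X \in Eset Hh y)]|)%N.
Proof.
rewrite inE => rk.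
have [v /andP[/eqP v0 vn]] : exists v : 'rV[F]_m, (v *m ldaF Hh X == 0) && (v != 0).
  apply/existsP; apply: contraR rk => /existsPn hv.
  suff : row_free (ldaF Hh X) by rewrite /row_free.
  apply: inj_row_free => w /eqP w0; apply/eqP.
  by have := hv w; rewrite w0 /= negbK.
rewrite -(cardsC1 (0 : F)) -(card_in_imset (f := fun c : F => c *: v)); last first.
  move=> a b _ _ /= /eqP; rewrite -subr_eq0 -scalerBl scaler_eq0 (negbTE vn) orbF subr_eq0.
  by move/eqP.
apply: subset_leq_card; apply/fintype.subsetP => _ /imsetP[c cn ->].
rewrite !inE scaler_eq0 negb_or vn andbT.
rewrite !inE in cn; rewrite cn /= -scalemxAl v0 scaler0 eqxx.
done.
Qed.

Lemma bad_le_sum :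
  (#|F|.-1 * #|Bad| <= \sum_(y : 'rV[F]_m | y != 0%R) #|Eset Hh y|)%N.
Proof.
have -> : (\sum_(y : 'rV[F]_m | y != 0%R) #|Eset Hh y| =
   \sum_(X : 'M[F]_(m, n)) #|[set y : 'rV[F]_m | (y != 0%R) && (X \in Eset Hh y)]|)%N.
  under eq_bigr => y _ do rewrite -sum1_card big_mkcond /=.
  rewrite exchange_big /=; apply: eq_bigr => X _.
  rewrite -sum1_card [RHS]big_mkcond [LHS]big_mkcond /=.
  by apply: eq_bigr => y _; rewrite !inE; case: (y != 0).
rewrite mulnC -sum_nat_const [X in (_ <= X)%N](bigID (fun X => X \in Bad)) /=.
apply: leq_trans (leq_addr _ _).
by apply: leq_sum => X; apply: bad_many.
Qed.
End Count2.

Section Prod.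
Variable F : finType.
Variable R : comPzSemiRingType.
Variable m : nat.

Lemma sum_rV_prod (g : F -> R) :
  \sum_(y : 'rV[F]_m) \prod_(i < m) g (y 0 i) = (\sum_a g a) ^+ m.
Proof.
have -> : (\sum_a g a) ^+ m = \prod_(i < m) \sum_a g a.
  by rewrite prodr_const card_ord.
rewrite bigA_distr_bigA /=.
rewrite (reindex (fun f : {ffun 'I_m -> F} => \row_i f i)) /=; last first.
  exists (fun y : 'rV[F]_m => [ffun i => y 0 i]) => f _.
    by apply/ffunP => i; rewrite ffunE mxE.
  by apply/rowP => i; rewrite !mxE ffunE.
by apply: eq_bigr => f _; apply: eq_bigr => i _; rewrite mxE.
Qed.
End Prod.

Section Sum.
Variable F : finFieldType.
Variable R : numFieldType.
Variable m : nat.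


Lemma sum_pow_supp (w : R) :
  \sum_(y : 'rV[F]_m) w ^+ #|supp y| = (1 + w *+ #|F|.-1) ^+ m.
Proof.
have -> : 1 + w *+ #|F|.-1 = \sum_(a : F) (if a == 0 then 1 else w).
  rewrite (bigD1 (0 : F)) //= eqxx; congr (_ + _).
  rewrite -(cardsC1 (0 : F)) -sumr_const; apply: eq_big => a; first by rewrite !inE.
  by rewrite !inE => /negbTE ->.
rewrite -sum_rV_prod.
apply: eq_bigr => y _.
rewrite -prodr_const [RHS](bigID (fun i => y 0 i == 0)) /=.
rewrite [X in _ = X * _]big1 ?mul1r; last by move=> i ->.
by apply: eq_big => i; [rewrite inE | rewrite inE => /negbTE ->].
Qed.

Lemma sum_pow_supp_nz (w : R) :
  \sum_(y : 'rV[F]_m | y != 0) w ^+ #|supp y| = (1 + w *+ #|F|.-1) ^+ m - 1.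
Proof.
rewrite -sum_pow_supp [in RHS](bigD1 0) //=.
have -> : supp (0 : 'rV[F]_m) = finset.set0 by apply/setP => i; rewrite !inE mxE eqxx.
by rewrite cards0 expr0 addrC addrK.
Qed.
End Sum.

Section ProbBound.
Variable F : finFieldType.
Variable R : numFieldType.
Variables m n : nat.
Variable Hh : 'M[bool]_(m, n).

Lemma prob_le (w1 K : R) :
  0 <= w1 -> 0 <= K ->
  (forall y : 'rV[F]_m, y != 0 ->
     ((#|F|%:R : R)^-1) ^+ #|NC Hh (supp y)| <=
       w1 ^+ #|supp y| + K * ((#|F|%:R : R)^-1) ^+ #|supp y|) ->
  (#|Bad F Hh|%:R : R) / (#|F| ^ (m * n))%:R <=
  (#|F|.-1%:R)^-1 * ((1 + w1 *+ #|F|.-1) ^+ m - 1 +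
                     K * (1 + (#|F|%:R : R)^-1 *+ #|F|.-1) ^+ m).
Proof.
move=> w0 K0 hy.
set q := #|F|.
have q1 : (1 < q)%N by apply: card_finNzRing_gt1.
set qi := (q%:R : R)^-1.
set Q := (q ^ (m * n))%N.
have Q0 : (0 : R) < Q%:R by rewrite ltr0n expn_gt0 (ltn_trans _ q1).
have qpos : (0 : R) < q%:R by rewrite ltr0n (ltn_trans _ q1).
have q1pos : (0 : R) < q.-1%:R by rewrite ltr0n -ltnS prednK // (ltn_trans _ q1).
have qi0 : 0 <= qi by rewrite invr_ge0 ltW.
have hE : forall y : 'rV[F]_m,
    (#|Eset Hh y|%:R : R) <= Q%:R * qi ^+ #|NC Hh (supp y)|.
  move=> y; have := E_bound Hh y; rewrite -(ler_nat R) natrM natrX.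
  rewrite /qi exprVn ler_pdivlMr ?exprn_gt0 //.
have key : (q.-1%:R : R) * #|Bad F Hh|%:R <=
    Q%:R * \sum_(y : 'rV[F]_m | y != 0) qi ^+ #|NC Hh (supp y)|.
  apply: le_trans (_ : (\sum_(y : 'rV[F]_m | y != 0) #|Eset Hh y|)%:R <= _).
    by rewrite -natrM ler_nat; apply: bad_le_sum.
  rewrite natr_sum mulr_sumr; apply: ler_sum => y _; exact: hE.
have S : \sum_(y : 'rV[F]_m | y != 0) qi ^+ #|NC Hh (supp y)| <=
    (1 + w1 *+ q.-1) ^+ m - 1 + K * (1 + qi *+ q.-1) ^+ m.
  apply: le_trans (_ : \sum_(y : 'rV[F]_m | y != 0) (w1 ^+ #|supp y| + K * qi ^+ #|supp y|) <= _).
    by apply: ler_sum => y yn; apply: hy.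
  rewrite big_split /= sum_pow_supp_nz lerD2l -mulr_sumr ler_wpM2l //.
  rewrite -sum_pow_supp [leRHS](bigD1 0) //= lerDr.
  by rewrite exprn_ge0.
rewrite ler_pdivrMr // -(ler_pM2l q1pos) !mulrA mulrV ?unitf_gt0 // mul1r.
apply: le_trans key _.
rewrite mulrC ler_wpM2r // ltW //.
Qed.
End ProbBound.


Lemma sub_card (T : finType) (k : nat) (A : {set T}) :
  (k <= #|A|)%N -> exists2 B : {set T}, B \subset A & #|B| = k.
Proof.
move Hc: #|A| => c; elim: c A Hc => [|c IH] A Hc hk.
  by exists A => //; rewrite Hc; case: k hk.
have [->|kn] := eqVneq k c.+1; first by exists A.
have kc : (k <= c)%N by rewrite -ltnS ltn_neqAle kn hk.
have : (0 < #|A|)%N by rewrite Hc.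
case/card_gt0P => x xA.
have := cardsD1 x A; rewrite xA Hc add1n => -[Hc'].
have [B sB cB] := IH _ (esym Hc') kc.
exists B => //; apply: (fintype.subset_trans sB); exact: subsetDl.
Qed.

Lemma NV_sub (m n : nat) (Hh : 'M[bool]_(m, n)) (S1 S2 : {set 'I_n}) :
  S1 \subset S2 -> NV Hh S1 \subset NV Hh S2.
Proof.
move=> /fintype.subsetP s12; apply/fintype.subsetP => i; rewrite !inE.
by case/existsP => j /andP[jS h]; apply/existsP; exists j; rewrite s12.
Qed.

Lemma graph_case (K : realType) (Rt : K) (m n : nat) (Hh : 'M[bool]_(m, n))
    (alpha A beta B eps theta : K) (T : {set 'I_m}) :
  0 < Rt -> Rt < 1 -> m%:R = n%:R * (1 - Rt) :> K ->
  good Rt Hh alpha A beta B eps theta ->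
  B * #|T|%:R <= #|NC Hh T|%:R \/
  #|T|%:R + Num.min ((beta - 1) * theta * (1 - Rt)) Rt * n%:R <= #|NC Hh T|%:R.
Proof.
move=> R0 R1 hm [[a1 aA] [b1 b2] _ [th0 th1] [L1 L2 R1' R2']].
have oR : 0 < 1 - Rt by rewrite subr_gt0.
have beta1 : 1 <= beta.
  apply: ltW; apply: lt_trans b1; rewrite ltr_pdivlMr // mul1r.
  by rewrite ltrBlDr ltrDl.
have n0 : (0 : K) <= n%:R by [].
have cle1 : Num.min ((beta - 1) * theta * (1 - Rt)) Rt <= (beta - 1) * theta * (1 - Rt).
  by rewrite ge_min lexx.
have cle2 : Num.min ((beta - 1) * theta * (1 - Rt)) Rt <= Rt.
  by rewrite ge_min lexx orbT.
set c := Num.min _ _ in cle1 cle2 *.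
set t := #|T|; set N := #|NC Hh T|.
case: (leP (t%:R : K) (theta * n%:R * (1 - Rt))) => h1.
  by left; apply: R1'.
right.
case: (leP (t%:R : K) (n%:R * (1 - Rt) / 2)) => h2.
  have := R2' T h2; rewrite -/t -/N => hb.
  apply: le_trans hb.
  have : c * n%:R <= (beta - 1) * t%:R.
    apply: le_trans (_ : (beta - 1) * (theta * n%:R * (1 - Rt)) <= _).
      have := ler_wpM2r n0 cle1; nra.
    by apply: ler_wpM2l; [rewrite subr_ge0 | apply: ltW].
  rewrite mulrBl mul1r; move=> h; rewrite -(lerD2l t%:R) in h.
  by apply: le_trans h _; rewrite addrC subrK.
set S := ~: NC Hh T.
have hN : (N%:R : K) = n%:R - #|S|%:R.
  by have := cardsC (NC Hh T); rewrite card_ord => /(congr1 (fun k => k%:R : K)); rewrite natrD => <-; rewrite addrK.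
have hT : (#|~: T|%:R : K) = m%:R - t%:R.
  by have := cardsC T; rewrite card_ord => /(congr1 (fun k => k%:R : K)); rewrite natrD => <-; rewrite addrAC subrr add0r.
have NVS : NV Hh S \subset ~: T.
  apply/fintype.subsetP => i; rewrite !inE => /existsP[j /andP[jS hij]].
  apply/negP => iT; move: jS; rewrite !inE negb_exists => /forallP/(_ i).
  by rewrite iT hij.
have cNV : (#|NV Hh S|%:R : K) <= m%:R - t%:R by rewrite -hT ler_nat subset_leq_card.
have cS : (#|S|%:R : K) <= m%:R - t%:R.
  case: (leP (#|S|%:Z) (Num.ceil (n%:R * (1 - Rt) / (2 * alpha)))) => hc.
    have := L2 S hc => hL.
    apply: le_trans cNV; apply: le_trans hL.
    by rewrite ler_peMl.
  exfalso.
  set x := n%:R * (1 - Rt) / (2 * alpha) in hc.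
  have x0 : 0 <= x.
    rewrite /x divr_ge0 // ?mulr_ge0 // ?ltW //; lra.
  have c0 : 0 <= Num.ceil x by rewrite ceil_ge0 (lt_le_trans _ x0) // ltrN10.
  have kS : (`|Num.ceil x|%N <= #|S|)%N.
    by rewrite -lez_nat gez0_abs // ltW.
  have [S' sS' cS'] := sub_card kS.
  have hk : (#|S'|%:Z <= Num.ceil x) by rewrite cS' gez0_abs.
  have := L2 S' hk; rewrite -/x => hL.
  have hNV : (#|NV Hh S'|%:R : K) <= #|NV Hh S|%:R by rewrite ler_nat subset_leq_card // NV_sub.
  have kx : x <= #|S'|%:R.
    apply: le_trans (ceil_ge x) _.
    by rewrite cS' -[X in X%:~R](gez0_abs c0).
  have ax : alpha * x = n%:R * (1 - Rt) / 2.
    rewrite /x; field; apply: lt0r_neq0; lra.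
  have : alpha * x <= alpha * #|S'|%:R by apply: ler_wpM2l; [apply: (le_trans _ a1) |].
  rewrite ax => h3.
  have := le_trans h3 (le_trans hL (le_trans hNV cNV)).
  rewrite -hm in h2 *; lra.
rewrite hN.
have : c * n%:R <= Rt * n%:R by apply: ler_wpM2r.
rewrite hm in cS; lra.
Qed.


Section Asym.
Variable K : realType.

Lemma powR_base_le (P x l s : K) : 0 <= s -> 0 < x -> x `^ l <= P ->
  P `^ (- s) <= x `^ (- (l * s)).
Proof.
move=> s0 x0 hP.
have xl0 : 0 < x `^ l by apply: powR_gt0.
rewrite !powRN powRrM lef_pV2 ?posrE ?powR_gt0 //; last exact: lt_le_trans hP.
by apply: ge0_ler_powR => //; rewrite ?nnegrE ltW // (lt_le_trans xl0).
Qed.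

Lemma nat_large (x : K) : exists N : nat, forall n, (N <= n)%N -> x <= n%:R.
Proof.
exists `|Num.ceil x|%N => n hn.
apply: le_trans (ceil_ge x) _.
apply: le_trans (_ : (`|Num.ceil x|%N)%:R <= _); last by rewrite ler_nat.
have := ler_norm (Num.ceil x); rewrite -(ler_int K) => h.
apply: le_trans h _; rewrite -abszE; by [].
Qed.

Lemma pow_small (a eps : K) : 0 < a -> 0 < eps ->
  exists N : nat, forall n, (N <= n)%N -> (n%:R : K) `^ (- a) <= eps.
Proof.
move=> a0 e0.
have [N hN] := nat_large (eps `^ (- a^-1)).
exists N.+1 => n hn.
have n0 : (0 : K) < n%:R by rewrite ltr0n (leq_trans _ hn).
have y0 : 0 < eps `^ (- a^-1) by apply: powR_gt0.
have := hN n (ltnW hn) => h.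
apply: le_trans (_ : (eps `^ (- a^-1)) `^ (- a) <= _).
  have hh := powR_base_le (P := n%:R) (x := eps `^ (- a^-1)) (l := 1) (ltW a0) y0.
  rewrite powRr1 ?(ltW y0) // mul1r in hh; exact: hh h.
by rewrite -powRrM mulrNN mulVf ?gt_eqF // powRr1 // ltW.
Qed.

Lemma expD_le (z : K) (m : nat) : 0 <= z -> 2 * m%:R * z <= 1 ->
  (1 + z) ^+ m - 1 <= 2 * m%:R * z.
Proof.
move=> z0; elim: m => [|k IH] h; first by rewrite expr0 subrr mulr0 mul0r.
have h' : 2 * k%:R * z <= 1.
  apply: le_trans h; apply: ler_wpM2r => //; apply: ler_wpM2l => //; rewrite ler_nat.
  exact: leqnSn.
have := IH h'; rewrite exprS => hk.
have e1 : (1 + z) * (1 + z) ^+ k - 1 = (1 + z) * ((1 + z) ^+ k - 1) + z by ring.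
rewrite e1 -natr1.
have hz : (1 + z) * ((1 + z) ^+ k - 1) <= (1 + z) * (2 * k%:R * z).
  by apply: ler_wpM2l => //; lra.
rewrite -natr1 in h.
nra.
Qed.

Lemma powR_nat1 (x r : K) : 0 < x -> x * x `^ r = x `^ (1 + r).
Proof.
move=> x0; rewrite powRD; last by apply/implyP => _; exact: lt0r_neq0.
by rewrite powRr1 // ltW.
Qed.

Lemma bound_n (lam B c k pr : K) (n m p : nat) :
  0 < lam -> 0 < c -> 1 < B -> 0 <= k ->
  (1 <= n)%N -> (2 <= p)%N -> (n%:R : K) `^ lam <= p%:R -> (m <= n)%N ->
  pr <= (p.-1%:R)^-1 * ((1 + (p%:R : K) `^ (- B) *+ p.-1) ^+ m - 1 +
          (p%:R : K) `^ (- (c * n%:R)) * (1 + (p%:R : K)^-1 *+ p.-1) ^+ m) ->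
  2 * (n%:R : K) `^ (1 + lam - lam * B) <= 1 ->
  2 <= (n%:R : K) `^ (lam * c / 2) ->
  k + 1 <= lam * c / 2 * n%:R ->
  pr * (n%:R : K) `^ k <= 2 * (n%:R : K) `^ (1 + k - lam * B) + (n%:R)^-1.
Proof.
move=> l0 c0 B1 k0 n1 p2 hp mn hpr C1 C2 C3.
set nn : K := n%:R; set P : K := p%:R.
have nn1 : 1 <= nn by rewrite ler1n.
have nn0 : 0 < nn by apply: lt_le_trans nn1.
have P2 : 2 <= P by rewrite (ler_nat K 2 p).
have P0 : 0 < P by apply: lt_le_trans P2.
set q1 : K := p.-1%:R.
have hq1 : q1 + 1 = P by rewrite /q1 natr1 prednK // (leq_trans _ p2).
have q11 : 1 <= q1 by lra.
have q10 : 0 < q1 by lra.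
set w1 := P `^ (- B).
have w10 : 0 <= w1 by apply: powR_ge0.
have S1 : w1 <= nn `^ (- (lam * B)) by apply: powR_base_le => //; lra.
set z := w1 *+ p.-1.
have ez : z = w1 * q1 by rewrite /z -mulr_natr.
have z0 : 0 <= z by rewrite ez mulr_ge0 // ltW.
have S2 : 2 * m%:R * z <= 1.
  apply: le_trans C1.
  have hz : z <= nn `^ (lam - lam * B).
    apply: le_trans (_ : w1 * P <= _); first by rewrite ez ler_wpM2l //; lra.
    rewrite /w1 mulrC powR_nat1 //.
    have -> : 1 + - B = - (B - 1) by ring.
    have -> : lam - lam * B = - (lam * (B - 1)) by ring.
    by apply: powR_base_le => //; lra.
  have -> : 1 + lam - lam * B = 1 + (lam - lam * B) by ring.
  rewrite -mulrA ler_wpM2l // -powR_nat1 //.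
  apply: le_trans (_ : nn * z <= _); first by apply: ler_wpM2r => //; rewrite ler_nat.
  by apply: ler_wpM2l => //; apply: ltW.
have S3 := expD_le z0 S2.
have S4 : (1 + P^-1 *+ p.-1) ^+ m <= 2 ^+ n.
  apply: le_trans (_ : 2 ^+ m <= _); last by rewrite ler_eXn2l // ltr1n.
  apply: lerXn2r; rewrite ?nnegrE //.
    by apply: addr_ge0 => //; apply: mulrn_wge0; rewrite invr_ge0 ltW.
  rewrite -mulr_natr -/q1.
  have : P^-1 * q1 <= 1 by rewrite mulrC ler_pdivrMr // mul1r; lra.
  lra.
set Kc := P `^ (- (c * nn)).
have Kc0 : 0 <= Kc by apply: powR_ge0.
have nk0 : 0 < nn `^ k by apply: powR_gt0.
have S6 : Kc * 2 ^+ n * nn `^ k <= nn^-1.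
  have e : Kc <= (nn `^ (lam * (c * nn)))^-1.
    rewrite -powRN; apply: powR_base_le => //; apply: mulr_ge0; apply: ltW => //.
  have big : 2 ^+ n * nn `^ k * nn <= nn `^ (lam * (c * nn)).
    have -> : lam * (c * nn) = lam * c / 2 * nn + lam * c / 2 * nn by field.
    rewrite powRD; last by apply/implyP => _; exact: lt0r_neq0.
    rewrite -mulrA; apply: ler_pM.
    - by rewrite exprn_ge0.
    - by rewrite mulr_ge0 // ltW.
    - rewrite powRrM powR_mulrn ?powR_ge0 //.
      by apply: lerXn2r; rewrite ?nnegrE ?powR_ge0.
    have -> : nn `^ k * nn = nn `^ (k + 1).
      rewrite powRD ?powRr1 ?(ltW nn0) //.
      by apply/implyP => _; exact: lt0r_neq0.
    exact: ler_powR.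
  have pos : 0 < 2 ^+ n * nn `^ k * nn by rewrite !mulr_gt0 // exprn_gt0.
  have h1 : Kc * 2 ^+ n * nn `^ k <= (nn `^ (lam * (c * nn)))^-1 * (2 ^+ n * nn `^ k).
    have hh : 0 <= 2 ^+ n * nn `^ k by rewrite mulr_ge0 ?exprn_ge0 // ltW.
    by rewrite -mulrA ler_wpM2r //; exact hh.
  have h2 : (nn `^ (lam * (c * nn)))^-1 * (2 ^+ n * nn `^ k) <=
            (2 ^+ n * nn `^ k * nn)^-1 * (2 ^+ n * nn `^ k).
    apply: ler_wpM2r; first by rewrite mulr_ge0 // ?exprn_ge0 // ltW.
    by rewrite lef_pV2 ?posrE // (lt_le_trans pos).
  apply: (le_trans h1); apply: (le_trans h2).
  rewrite invfM mulrC mulrA mulfV ?mul1r //.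
  by apply: lt0r_neq0; rewrite mulr_gt0 // exprn_gt0.
have hpr2 : pr <= 2 * nn * w1 + Kc * 2 ^+ n.
  apply: le_trans hpr _.
  apply: le_trans (_ : q1^-1 * (2 * m%:R * z + Kc * 2 ^+ n) <= _).
    apply: ler_wpM2l; first by rewrite invr_ge0 ltW.
    apply: lerD => //; apply: ler_wpM2l => //.
  rewrite mulrDr; apply: lerD.
    have -> : q1^-1 * (2 * m%:R * z) = 2 * m%:R * w1.
      by rewrite ez; field; apply: lt0r_neq0.
    by apply: ler_wpM2r => //; apply: ler_wpM2l => //; rewrite /nn ler_nat.
  rewrite ler_pdivrMl // ler_peMl // mulr_ge0 // exprn_ge0 //.
apply: le_trans (_ : (2 * nn * w1 + Kc * 2 ^+ n) * nn `^ k <= _).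
  by apply: ler_wpM2r => //; apply: ltW.
rewrite mulrDl; apply: lerD => //.
rewrite -!mulrA ler_wpM2l //.
have -> : nn `^ (1 + k - lam * B) = nn * (nn `^ (- (lam * B)) * nn `^ k).
  rewrite mulrA powR_nat1 // -powRD; last by apply/implyP => _; exact: lt0r_neq0.
  congr (_ `^ _); ring.
apply: ler_wpM2l; first exact: ltW.
by apply: ler_wpM2r; [apply: ltW|].
Qed.

Lemma per_T (P B c nn : K) (t N : nat) : 1 <= P ->
  (B * t%:R <= N%:R \/ t%:R + c * nn <= N%:R) ->
  (P^-1) ^+ N <= (P `^ (- B)) ^+ t + P `^ (- (c * nn)) * (P^-1) ^+ t.
Proof.
move=> P1 h.
have P0 : 0 <= P by apply: le_trans P1.
have e : forall j : nat, (P^-1) ^+ j = P `^ (- j%:R) by move=> j; rewrite powR_invn // exprVn.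
rewrite !e.
case: h => h.
  apply: le_trans (_ : (P `^ (- B)) ^+ t <= _); last by rewrite lerDl mulr_ge0 // powR_ge0.
  rewrite -powR_mulrn ?powR_ge0 // -powRrM mulNr.
  by apply: ler_powR => //; rewrite lerN2.
apply: le_trans (_ : P `^ (- (c * nn)) * P `^ (- t%:R) <= _); last by rewrite lerDr exprn_ge0 // powR_ge0.
have P0' : P != 0 by apply: lt0r_neq0; apply: lt_le_trans P1.
rewrite -powRD; last by apply/implyP => _.
by apply: ler_powR => //; lra.
Qed.
End Asym.


Unset Implicit Arguments.
Local Open Scope classical_set_scope.
Local Open Scope ring_scope.

Lemma le5 (a b c d e n : nat) : ((a + b + c + d + e).+1 <= n)%N ->
  [/\ (a <= n)%N, (b <= n)%N, (c <= n)%N, (d <= n)%N & (e <= n)%N].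
Proof. move=> h; split; lia. Qed.

Theorem lemma4 (K : realType) (Rt lam : K) (dV dC : nat)
    (alpha A beta B eps theta delta : K)
    (I : nat -> Prop) (m : nat -> nat) (G : forall n : nat, 'M[bool]_(m n, n)) :
  0 < Rt -> Rt < 1 -> 0 < lam ->
  dV%:R / dC%:R = 1 - Rt ->
  (forall n, I n ->
     [/\ (m n)%:R = n%:R * (1 - Rt),
         regular (G n) dV dC &
         good Rt (G n) alpha A beta B eps theta]) ->
  0 < delta -> 2 + (1 + delta) / lam < B ->
  exists o : nat -> K,
    o n @[n --> \oo] --> (0 : K) /\
    forall n, I n ->
      prob_not_full_rank lam (G n) <=
        (n%:R : K) `^ (- (2 * lam + delta)) * (1 + o n).
Proof.
move=> R0 R1 l0 hd hI d0 hB.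
set k := 2 * lam + delta.
have k0 : 0 < k by rewrite /k; lra.
have lB : 2 * lam + 1 + delta < lam * B.
  have e : lam * (2 + (1 + delta) / lam) = 2 * lam + 1 + delta.
    by field; apply: lt0r_neq0.
  by rewrite -e ltr_pM2l.
have B1 : 1 < B.
  have : 0 < (1 + delta) / lam by rewrite divr_gt0 //; lra.
  lra.
case: (pselect (exists n, I n)) => [[n0 In0]|noI]; last first.
  exists (fun _ => 0); split; first exact: cvg_cst.
  by move=> n In; exfalso; apply: noI; exists n.
have [_ _ [_ [b1 _] _ [th0 _] _]] := hI n0 In0.
have oR : 0 < 1 - Rt by lra.
have beta1 : 1 < beta.
  apply: lt_trans b1; rewrite ltr_pdivlMr // mul1r; lra.
set c := Num.min ((beta - 1) * theta * (1 - Rt)) Rt.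
have c0 : 0 < c.
  by rewrite lt_min R0 andbT !mulr_gt0 // subr_gt0.
pose pr n := prob_not_full_rank lam (G n).
have main_bound : forall n, I n -> (1 <= n)%N ->
    2 * (n%:R : K) `^ (1 + lam - lam * B) <= 1 ->
    2 <= (n%:R : K) `^ (lam * c / 2) ->
    k + 1 <= lam * c / 2 * n%:R ->
    pr n * (n%:R : K) `^ k <= 2 * (n%:R : K) `^ (1 + k - lam * B) + (n%:R)^-1.
  move=> n In n1 C1 C2 C3.
  have [hm _ hg] := hI n In.
  rewrite /pr /prob_not_full_rank.
  set p := lda_prime n lam.
  have [pp hp] : prime p /\ (`|Num.ceil ((n%:R : K) `^ lam)| <= p)%N.
    by rewrite /p /lda_prime; case: ex_minnP => q /andP[qp qh] _.
  have p1 : (1 <= p)%N by apply: prime_gt0.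
  have hy : forall y : 'rV['F_p]_(m n), y != 0 ->
      ((#|'F_p|%:R : K)^-1) ^+ #|NC (G n) (supp y)| <=
        ((p%:R : K) `^ (- B)) ^+ #|supp y| +
        (p%:R : K) `^ (- (c * n%:R)) * ((#|'F_p|%:R : K)^-1) ^+ #|supp y|.
    move=> y _; rewrite card_Fp //; apply: per_T; first by rewrite ler1n.
    by have := graph_case (supp y) R0 R1 hm hg.
  have hpr := @prob_le 'F_p K (m n) n (G n) _ _ (powR_ge0 _ _) (powR_ge0 _ _) hy.
  rewrite card_Fp // in hpr.
  rewrite card_mx card_Fp //.
  have mn : (m n <= n)%N.
    rewrite -(ler_nat K) hm ler_piMr //; lra.
  have hpn : (n%:R : K) `^ lam <= p%:R.
    apply: le_trans (ceil_ge _) _.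
    apply: le_trans (_ : (`|Num.ceil ((n%:R : K) `^ lam)|%N)%:R <= _); last by rewrite ler_nat.
    have := ler_norm (Num.ceil ((n%:R : K) `^ lam)); rewrite -(ler_int K) => h.
    by apply: le_trans h _; rewrite -abszE.
  apply: (bound_n l0 c0 B1 (ltW k0) n1 (prime_gt1 pp) hpn mn _ C1 C2 C3).
  exact: hpr.
have pr0 : forall n, 0 <= pr n.
  by move=> n; rewrite /pr /prob_not_full_rank divr_ge0.
pose o n := if `[< I n >] then pr n * (n%:R : K) `^ k else 0.
exists o; split.
  apply/cvgrPdist_le => e e0.
  have e4 : 0 < e / 4 by rewrite divr_gt0.
  have e2 : 0 < e / 2 by rewrite divr_gt0.
  have h2 : (0 : K) < 1 / 2 by rewrite divr_gt0.
  have ea1 : 0 < - (1 + k - lam * B) by rewrite /k; lra.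
  have [N1 hN1] := pow_small ea1 e4.
  have [N2 hN2] := pow_small (@ltr01 K) e2.
  have ea3 : 0 < - (1 + lam - lam * B) by lra.
  have [N3 hN3] := pow_small ea3 h2.
  have ea4 : 0 < lam * c / 2 by rewrite divr_gt0 // mulr_gt0.
  have [N4 hN4] := pow_small ea4 h2.
  have [N5 hN5] := nat_large ((k + 1) / (lam * c / 2)).
  apply: (filterS _ (nbhs_infty_ge (N1 + N2 + N3 + N4 + N5).+1)) => n hn.
  rewrite sub0r normrN /o; case: asboolP => In; last by rewrite normr0 ltW.
  have n1 : (1 <= n)%N by apply: leq_trans hn.
  have nn0 : (0 : K) < n%:R by rewrite ltr0n.
  have [i1 i2 i3 i4 i5] := @le5 N1 N2 N3 N4 N5 n hn.
  have := hN1 n i1; rewrite opprK => B1'.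
  have := hN2 n i2; rewrite powR_inv1 ?ler0n // => B2'.
  have := hN3 n i3; rewrite opprK => B3'.
  have := hN4 n i4; rewrite powRN div1r lef_pV2 ?posrE ?powR_gt0 // => C2.
  have := hN5 n i5; rewrite ler_pdivrMr // mulrC => C3.
  have C1 : 2 * (n%:R : K) `^ (1 + lam - lam * B) <= 1 by lra.
  have := main_bound n In n1 C1 C2 C3 => hb.
  rewrite ger0_norm ?mulr_ge0 ?powR_ge0 //.
  apply: le_trans hb _; lra.
move=> n In.
move: In; have [->|n1] := posnP n => In.
  have [hm _ _] := hI 0%N In.
  have hm0 : m 0%N = 0%N by apply/eqP; rewrite -(eqr_nat K) hm mul0r.
  suff -> : prob_not_full_rank lam (G 0%N) = 0 by rewrite powR0 ?mul0r // oppr_eq0 gt_eqF.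
  rewrite /prob_not_full_rank.
  apply/eqP; rewrite mulf_eq0; apply/orP; left.
  rewrite pnatr_eq0 cards_eq0; apply/eqP/setP => X; rewrite !inE.
  have r0 : (\rank (lda_matrix (G 0%N) X) <= 0)%N.
    exact: leq_trans (rank_leq_row _) (eq_leq hm0).
  rewrite leqn0 in r0.
  by rewrite (eqP r0) [X in _ != X]hm0.
rewrite /o asboolT // mulrDr mulr1 mulrA.
have nn0 : (0 : K) < n%:R by rewrite ltr0n.
rewrite powRN mulrAC mulVf ?mul1r ?gt_eqF ?powR_gt0 // lerDr.
by rewrite invr_ge0 powR_ge0.
Qed.
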